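(* Let $(X,d)$ be a doubling proper metric space and $(\varepsilon_k)$ a sequence of positive reals tending to $0$. Let $A\subset X$ be such that for each $x\in A$ there is a completely parametrized rectifiable curve $\gamma:(\mathbb R,0)\to(X,x)$ with $\sup_{0<|h|\le1/k}\left|\frac{d(\gamma(h),\gamma(-h))}{2|h|}-1\right|\le\varepsilon_k$ for all $k$. Let $x_0$ be a $t$-density point of $A$, let $r_n\to0$ be positive, and suppose $(X,x_0,d/r_n)$ converges in the pointed Gromov–Hausdorff topology to $(Z,z_0)$. Then every point of $Z$ lies on a bi-infinite geodesic $\gamma:\mathbb R\to Z$ (i.e. $d(\gamma(s),\gamma(t))=|s-t|$ for all $s,t$) which is a locally uniform limit of rescalings $t\mapsto\hat\gamma_n(r_nt)$ of such completely parametrized curves $\hat\gamma_n$ passing through points of $A$.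
   Context: Complete parametrization: given a rectifiable curve $\gamma:[0,\ell]\to X$ parametrized by arclength and $t_0\in[0,\ell]$, its complete parametrization at $t_0$ is $\gamma^0:\mathbb R\to X$ with $\gamma^0(t)=\gamma(t+t_0)$ on $[-t_0,\ell-t_0]$, constant equal to $\gamma(0)$ on $(-\infty,-t_0]$ and to $\gamma(\ell)$ on $[\ell-t_0,\infty)$. A point $a\in A$ is a $t$-density point of $A$ if for every $\varepsilon>0$, $\lim_{r\to0}\frac1r\sup_{z\in B(a,r)}d(z,A\cap B(a,(1+\varepsilon)r))=0$. Convergence of curves is uniform convergence on compact subsets of $\mathbb R$, in a common space into which the rescaled balls isometrically embed. *)

(* Defs.v *)
From Stdlib Require Import Reals Lra.
Open Scope R_scope.

Definition is_metric {X : Type} (d : X -> X -> R) : Prop :=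
  (forall x y, 0 <= d x y) /\
  (forall x y, d x y = 0 <-> x = y) /\
  (forall x y, d x y = d y x) /\
  (forall x y z, d x z <= d x y + d y z).

Definition doubling {X : Type} (d : X -> X -> R) : Prop :=
  exists N : nat, forall (x : X) (r : R), 0 < r ->
    exists c : nat -> X, forall y, d x y < 2 * r ->
      exists i, (i < N)%nat /\ d (c i) y < r.

Definition proper {X : Type} (d : X -> X -> R) : Prop :=
  forall (x : X) (Rad : R) (u : nat -> X),
    (forall n, d x (u n) <= Rad) ->
    exists (phi : nat -> nat) (y : X),
      (forall k, (phi k < phi (S k))%nat) /\
      d x y <= Rad /\
      Un_cv (fun k => d (u (phi k)) y) 0.

Fixpoint psum {X : Type} (d : X -> X -> R) (g : R -> X) (p : nat -> R) (n : nat) : R :=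
  match n with
  | O => 0
  | S m => psum d g p m + d (g (p m)) (g (p (S m)))
  end.

Definition partition (a b : R) (p : nat -> R) (n : nat) : Prop :=
  p O = a /\ p n = b /\ forall i, (i < n)%nat -> p i <= p (S i).

Definition length_eq {X : Type} (d : X -> X -> R) (g : R -> X) (a b L : R) : Prop :=
  is_lub (fun s => exists (p : nat -> R) (n : nat), partition a b p n /\ s = psum d g p n) L.

(* gamma : [0,l] -> X parametrized by arclength (only values on [0,l] matter) *)
Definition arclength_param {X : Type} (d : X -> X -> R) (gamma : R -> X) (l : R) : Prop :=
  0 <= l /\ forall a b, 0 <= a -> a <= b -> b <= l -> length_eq d gamma a b (b - a).

Definition complete_param {X : Type} (gamma : R -> X) (l t0 : R) (g : R -> X) : Prop :=
  forall t,
    (- t0 <= t <= l - t0 -> g t = gamma (t + t0)) /\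
    (t <= - t0 -> g t = gamma 0) /\
    (l - t0 <= t -> g t = gamma l).

Definition CP_curve {X : Type} (d : X -> X -> R) (g : R -> X) (x : X) : Prop :=
  exists (gamma : R -> X) (l t0 : R),
    arclength_param d gamma l /\ 0 <= t0 <= l /\ complete_param gamma l t0 g /\ g 0 = x.

Definition eps_good {X : Type} (d : X -> X -> R) (eps : nat -> R) (g : R -> X) : Prop :=
  forall k : nat, (1 <= k)%nat -> forall h : R, 0 < Rabs h -> Rabs h <= / INR k ->
    Rabs (d (g h) (g (- h)) / (2 * Rabs h) - 1) <= eps k.

(* a in A and for every eps>0,
   lim_{r->0} (1/r) sup_{z in B(a,r)} dist(z, A ∩ B(a,(1+eps) r)) = 0,
   written out with quantifiers (dist to the empty set being +infinity). *)
Definition t_density_point {X : Type} (d : X -> X -> R) (A : X -> Prop) (a : X) : Prop :=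
  A a /\
  forall eps, 0 < eps -> forall eta, 0 < eta ->
    exists delta, 0 < delta /\ forall r, 0 < r -> r < delta ->
      forall z, d a z < r ->
        exists b, A b /\ d a b < (1 + eps) * r /\ d z b <= eta * r.

(* (X, x0, d / r n) -> (Z, z0), realized by isometric embeddings into a common
   metric space (W, dW): iota n : (X, d / r n) -> W, iotaZ : Z -> W,
   base points converge, and the images converge in the local Hausdorff sense. *)
Definition pGH_realization {X Z W : Type} (d : X -> X -> R) (x0 : X) (r : nat -> R)
    (dZ : Z -> Z -> R) (z0 : Z) (dW : W -> W -> R)
    (iota : nat -> X -> W) (iotaZ : Z -> W) : Prop :=
  is_metric dW /\
  (forall n x y, dW (iota n x) (iota n y) = d x y / r n) /\
  (forall z z', dW (iotaZ z) (iotaZ z') = dZ z z') /\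
  Un_cv (fun n => dW (iota n x0) (iotaZ z0)) 0 /\
  (forall Rad eps, 0 < Rad -> 0 < eps -> exists N, forall n, (N <= n)%nat ->
     (forall x, d x0 x / r n <= Rad -> exists z, dW (iota n x) (iotaZ z) <= eps) /\
     (forall z, dZ z0 z <= Rad -> exists x, dW (iota n x) (iotaZ z) <= eps)).

Definition pGH_converges {X Z : Type} (d : X -> X -> R) (x0 : X) (r : nat -> R)
    (dZ : Z -> Z -> R) (z0 : Z) : Prop :=
  exists (W : Type) (dW : W -> W -> R) (iota : nat -> X -> W) (iotaZ : Z -> W),
    pGH_realization d x0 r dZ z0 dW iota iotaZ.

(* Main.v *)
Require Import Defs.
From Stdlib Require Import Reals Lra Lia ZArith Classical ClassicalEpsilon Cantor.
Open Scope R_scope.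

Lemma choice_fun {A B : Type} (P : A -> B -> Prop) :
  (forall a, exists b, P a b) -> exists f : A -> B, forall a, P a (f a).
Proof.
  intros H. exists (fun a => proj1_sig (constructive_indefinite_description _ (H a))).
  intro a. exact (proj2_sig (constructive_indefinite_description _ (H a))).
Qed.

Definition sincr (s : nat -> nat) := forall k, (s k < s (S k))%nat.

Lemma sincr_mono s : sincr s -> forall i j, (i <= j)%nat -> (s i <= s j)%nat.
Proof.
  intros Hs i j Hij. induction Hij. lia. specialize (Hs m). lia.
Qed.

Lemma sincr_ge s : sincr s -> forall k, (k <= s k)%nat.
Proof.
  intros Hs k. induction k. lia. specialize (Hs k). lia.
Qed.

Lemma sincr_comp s t : sincr s -> sincr t -> sincr (fun k => s (t k)).
Proof.
  intros Hs Ht k. simpl. specialize (Ht k).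
  assert (H := sincr_mono s Hs (S (t k)) (t (S k)) Ht). specialize (Hs (t k)). lia.
Qed.

Lemma inv_small eps : 0 < eps -> exists N, forall n, (N <= n)%nat -> / (INR n + 1) < eps.
Proof.
  intros He. destruct (archimed_cor1 eps He) as [N [HN HN0]]. exists N. intros n Hn.
  apply Rle_lt_trans with (/ INR N); auto.
  apply Rinv_le_contravar. apply lt_0_INR; lia.
  apply le_INR in Hn. lra.
Qed.

Lemma metric_tri {X} (d : X -> X -> R) : is_metric d -> forall x y z, d x z <= d x y + d y z.
Proof. intros [_ [_ [_ H]]]; exact H. Qed.
Lemma metric_sym {X} (d : X -> X -> R) : is_metric d -> forall x y, d x y = d y x.
Proof. intros [_ [_ [H _]]]; exact H. Qed.
Lemma metric_pos {X} (d : X -> X -> R) : is_metric d -> forall x y, 0 <= d x y.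
Proof. intros [H _]; exact H. Qed.

Fixpoint Nseq (Kf : nat -> nat) (m : nat) : nat :=
  match m with O => Kf O | S m' => Nat.max (S (Nseq Kf m')) (Kf (S m')) end.

Lemma Nseq_sincr Kf : sincr (Nseq Kf).
Proof. intro k. change (Nseq Kf (S k)) with (Nat.max (S (Nseq Kf k)) (Kf (S k))). lia. Qed.
Lemma Nseq_ge Kf m : (Kf m <= Nseq Kf m)%nat.
Proof. destruct m. simpl; lia. change (Nseq Kf (S m)) with (Nat.max (S (Nseq Kf m)) (Kf (S m))). lia. Qed.

Section Gen.
Variables (W Z : Type) (dW : W -> W -> R) (dZ : Z -> Z -> R) (iotaZ : Z -> W) (z0 : Z).
Hypothesis hW : is_metric dW.
Hypothesis hiso : forall z z', dW (iotaZ z) (iotaZ z') = dZ z z'.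
Hypothesis hZp : proper dZ.

Lemma extract_conv (w : nat -> W) (C : R)
  (H : forall e, 0 < e -> exists K, forall k, (K <= k)%nat ->
        exists z, dZ z0 z <= C /\ dW (w k) (iotaZ z) <= e) :
  exists rho y, sincr rho /\ Un_cv (fun k => dW (w (rho k)) (iotaZ y)) 0.
Proof.
  assert (H1 : forall m : nat, exists K, forall k, (K <= k)%nat ->
        exists z, dZ z0 z <= C /\ dW (w k) (iotaZ z) <= / (INR m + 1)).
  { intro m. apply H. apply Rinv_0_lt_compat. assert (0 <= INR m) by apply pos_INR. lra. }
  destruct (choice_fun _ H1) as [Kf HKf].
  assert (H2 : forall m, exists z, dZ z0 z <= C /\ dW (w (Nseq Kf m)) (iotaZ z) <= / (INR m + 1)).
  { intro m. apply HKf. apply Nseq_ge. }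
  destruct (choice_fun _ H2) as [zs Hzs].
  destruct (hZp z0 C zs (fun n => proj1 (Hzs n))) as [phi [y [Hphi [_ Hcv]]]].
  exists (fun k => Nseq Kf (phi k)), y. split.
  { apply sincr_comp. apply Nseq_sincr. exact Hphi. }
  intros eps He.
  destruct (Hcv (eps/2)) as [N1 HN1]. lra.
  destruct (inv_small (eps/2)) as [N2 HN2]. lra.
  exists (Nat.max N1 N2). intros n Hn.
  specialize (HN1 n ltac:(lia)). unfold R_dist in *.
  assert (Hp : (N2 <= phi n)%nat). { pose proof (sincr_ge phi Hphi n). lia. }
  specialize (HN2 _ Hp).
  pose proof (proj2 (Hzs (phi n))) as Hz.
  pose proof (metric_tri dW hW (w (Nseq Kf (phi n))) (iotaZ (zs (phi n))) (iotaZ y)) as Ht.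
  rewrite hiso in Ht.
  pose proof (metric_pos dW hW (w (Nseq Kf (phi n))) (iotaZ y)).
  pose proof (metric_pos dZ).
  rewrite Rminus_0_r in *. rewrite Rabs_right in HN1.
  2:{ rewrite <- hiso. apply Rle_ge, metric_pos; auto. }
  rewrite Rabs_right by lra. lra.
Qed.

Lemma cauchy_conv (w : nat -> W) (C : R)
  (H : forall e, 0 < e -> exists K, forall k, (K <= k)%nat ->
        exists z, dZ z0 z <= C /\ dW (w k) (iotaZ z) <= e)
  (Hc : forall e, 0 < e -> exists K, forall k l, (K <= k)%nat -> (K <= l)%nat -> dW (w k) (w l) <= e) :
  exists y, Un_cv (fun k => dW (w k) (iotaZ y)) 0.
Proof.
  destruct (extract_conv w C H) as [rho [y [Hrho Hcv]]]. exists y.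
  intros eps He.
  destruct (Hc (eps/2)) as [K HK]. lra.
  destruct (Hcv (eps/2)) as [J HJ]. lra.
  exists K. intros n Hn. unfold R_dist in *.
  set (j := Nat.max J K). specialize (HJ j ltac:(lia)).
  assert (Hj : (K <= rho j)%nat). { pose proof (sincr_ge rho Hrho j). lia. }
  specialize (HK n (rho j) Hn Hj).
  pose proof (metric_tri dW hW (w n) (w (rho j)) (iotaZ y)).
  pose proof (metric_pos dW hW (w n) (iotaZ y)).
  pose proof (metric_pos dW hW (w (rho j)) (iotaZ y)).
  rewrite Rminus_0_r in *. rewrite Rabs_right in HJ by lra.
  rewrite Rabs_right by lra. lra.
Qed.
End Gen.


Lemma floor_nat x : 0 <= x -> exists a : nat, INR a <= x < INR a + 1.
Proof.
  intro Hx. destruct (archimed x) as [H1 H2].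
  assert (Hpos : (0 < up x)%Z). { apply lt_IZR. lra. }
  exists (Z.to_nat (up x - 1)).
  rewrite INR_IZR_INZ, Z2Nat.id by lia. rewrite minus_IZR. simpl. lra.
Qed.

Definition qgrid (i : nat) : R :=
  let (a, b) := Cantor.of_nat i in - INR b + INR a / (INR b + 1).

Lemma qgrid_to a b : qgrid (Cantor.to_nat (a, b)) = - INR b + INR a / (INR b + 1).
Proof. unfold qgrid. rewrite Cantor.cancel_of_to. reflexivity. Qed.

Lemma grid_cover T delta : 0 < T -> 0 < delta ->
  exists b Amax, forall t, Rabs t <= T ->
    exists a, (a <= Amax)%nat /\ Rabs (t - qgrid (Cantor.to_nat (a, b))) <= delta.
Proof.
  intros HT Hd.
  destruct (archimed_cor1 delta Hd) as [N1 [HN1 HN1p0]].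
  destruct (floor_nat T) as [N2 HN2]. lra.
  set (b := Nat.max N1 (S N2)).
  assert (Hb1 : INR N1 <= INR b) by (apply le_INR; lia).
  assert (Hb2 : INR (S N2) <= INR b) by (apply le_INR; lia).
  rewrite S_INR in Hb2.
  assert (HN1p : 0 < INR N1) by (apply lt_0_INR; lia).
  exists b, (2 * b * (b + 1))%nat. intros t Ht.
  assert (HtT : - INR b <= t <= INR b) by (unfold Rabs in Ht; destruct (Rcase_abs t); lra).
  set (B := INR b + 1).
  assert (HB : 0 < B) by (unfold B; lra).
  destruct (floor_nat ((t + INR b) * B)) as [a Ha].
  { apply Rmult_le_pos; lra. }
  exists a. split.
  - apply INR_le. rewrite mult_INR, mult_INR, plus_INR. simpl.
    assert ((t + INR b) * B <= (2 * INR b) * B) by (apply Rmult_le_compat_r; lra).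
    unfold B in *. lra.
  - rewrite qgrid_to. fold B.
    assert (E : t - (- INR b + INR a / B) = ((t + INR b) * B - INR a) / B) by (field; lra).
    rewrite E. rewrite Rabs_right.
    2:{ apply Rle_ge. unfold Rdiv. apply Rmult_le_pos. lra. left; apply Rinv_0_lt_compat; lra. }
    apply Rle_trans with (1 / B).
    { unfold Rdiv. apply Rmult_le_compat_r. left; apply Rinv_0_lt_compat; lra. lra. }
    apply Rle_trans with (/ INR N1). 2: lra.
    unfold Rdiv. rewrite Rmult_1_l. apply Rinv_le_contravar. lra. unfold B; lra.
Qed.

Lemma fin_max (P : nat -> nat -> nat -> Prop) (M : nat) :
  (forall a, (a <= M)%nat -> exists K, forall k l, (K <= k)%nat -> (K <= l)%nat -> P a k l) ->
  exists K, forall a k l, (a <= M)%nat -> (K <= k)%nat -> (K <= l)%nat -> P a k l.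
Proof.
  induction M; intro H.
  - destruct (H 0%nat (le_n 0)) as [K HK]. exists K. intros a k l Ha. assert (a = 0%nat) by lia. subst. auto.
  - destruct IHM as [K1 HK1]. { intros a Ha. apply H. lia. }
    destruct (H (S M) (le_n _)) as [K2 HK2].
    exists (Nat.max K1 K2). intros a k l Ha Hk Hl.
    destruct (Nat.eq_dec a (S M)). subst. apply HK2; lia. apply HK1; lia.
Qed.


Section AA.
Variables (W Z : Type) (dW : W -> W -> R) (dZ : Z -> Z -> R) (iotaZ : Z -> W) (z0 : Z).
Hypothesis hW : is_metric dW.
Hypothesis hiso : forall z z', dW (iotaZ z) (iotaZ z') = dZ z z'.
Hypothesis hZp : proper dZ.
Variable f : nat -> R -> W.
Hypothesis Hlip : forall k u v, dW (f k u) (f k v) <= Rabs (u - v).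
Hypothesis Happ : forall T, 0 < T -> exists C, forall e, 0 < e -> exists K, forall k, (K <= k)%nat ->
  forall t, Rabs t <= T -> exists z, dZ z0 z <= C /\ dW (f k t) (iotaZ z) <= e.

Lemma app_point s t : sincr s -> exists C, forall e, 0 < e -> exists K, forall k, (K <= k)%nat ->
  exists z, dZ z0 z <= C /\ dW (f (s k) t) (iotaZ z) <= e.
Proof.
  intro Hs. destruct (Happ (Rabs t + 1)) as [C HC]. pose proof (Rabs_pos t); lra.
  exists C. intros e He. destruct (HC e He) as [K HK]. exists K. intros k Hk.
  apply HK. pose proof (sincr_ge s Hs k); lia. lra.
Qed.

Lemma rho_exists : forall p : (nat -> nat) * nat, exists rho, sincr rho /\
  (sincr (fst p) -> exists y, Un_cv (fun k => dW (f (fst p (rho k)) (qgrid (snd p))) (iotaZ y)) 0).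
Proof.
  intros [s i]. simpl. destruct (classic (sincr s)) as [Hs|Hs].
  - destruct (app_point s (qgrid i) Hs) as [C HC].
    destruct (extract_conv W Z dW dZ iotaZ z0 hW hiso hZp (fun k => f (s k) (qgrid i)) C HC)
      as [rho [y [Hr Hy]]].
    exists rho. split; auto. intros _. exists y. exact Hy.
  - exists (fun k => k). split. intro k; lia. intro; contradiction.
Qed.

Theorem AA : exists psi gam, sincr psi /\ forall T e, 0 < T -> 0 < e -> exists K, forall k, (K <= k)%nat ->
   forall t, Rabs t <= T -> dW (f (psi k) t) (iotaZ (gam t)) <= e.
Proof.
  destruct (choice_fun _ rho_exists) as [Rho HRho].
  set (sg := fix sg (i : nat) : nat -> nat :=
         match i with O => fun k => k | S i' => fun k => sg i' (Rho (sg i', i') k) end).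
  assert (Hsg : forall i, sincr (sg i)).
  { induction i. intro k; simpl; lia. simpl. apply sincr_comp; auto. apply (HRho (sg i, i)). }
  assert (Hconv : forall i, exists y, Un_cv (fun k => dW (f (sg (S i) k) (qgrid i)) (iotaZ y)) 0).
  { intro i. apply (proj2 (HRho (sg i, i))). simpl. apply Hsg. }
  assert (Hnest : forall i j, (i <= j)%nat -> forall k, exists m, (k <= m)%nat /\ sg j k = sg i m).
  { intros i j Hij. induction Hij; intro k. exists k; split; auto.
    destruct (IHHij (Rho (sg m, m) k)) as [m' [Hm' E]]. exists m'. split.
    pose proof (sincr_ge _ (proj1 (HRho (sg m, m))) k). lia.
    simpl. exact E. }
  set (psi := fun k => sg (S k) k).
  assert (Hpsi : sincr psi).
  { intro k. unfold psi. change (sg (S (S k)) (S k)) with (sg (S k) (Rho (sg (S k), S k) (S k))).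
    pose proof (sincr_ge _ (proj1 (HRho (sg (S k), S k))) (S k)).
    pose proof (sincr_mono _ (Hsg (S k)) _ _ H). pose proof (Hsg (S k) k). lia. }
  assert (Hcg : forall i e, 0 < e -> exists K, forall k l, (K <= k)%nat -> (K <= l)%nat ->
            dW (f (psi k) (qgrid i)) (f (psi l) (qgrid i)) <= e).
  { intros i e He. destruct (Hconv i) as [y Hy]. destruct (Hy (e/2)) as [N HN]. lra.
    exists (Nat.max N (S i)). intros k l Hk Hl.
    destruct (Hnest (S i) (S k) ltac:(lia) k) as [m1 [Hm1 E1]].
    destruct (Hnest (S i) (S l) ltac:(lia) l) as [m2 [Hm2 E2]].
    unfold psi. rewrite E1, E2.
    pose proof (HN m1 ltac:(lia)). pose proof (HN m2 ltac:(lia)). unfold R_dist in *.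
    rewrite Rminus_0_r in *.
    pose proof (metric_tri dW hW (f (sg (S i) m1) (qgrid i)) (iotaZ y) (f (sg (S i) m2) (qgrid i))).
    rewrite (metric_sym dW hW (iotaZ y)) in H1.
    pose proof (Rle_abs (dW (f (sg (S i) m1) (qgrid i)) (iotaZ y))).
    pose proof (Rle_abs (dW (f (sg (S i) m2) (qgrid i)) (iotaZ y))).
    lra. }
  assert (Hunif : forall T e, 0 < T -> 0 < e -> exists K, forall k l, (K <= k)%nat -> (K <= l)%nat ->
            forall t, Rabs t <= T -> dW (f (psi k) t) (f (psi l) t) <= e).
  { intros T e HT He. destruct (grid_cover T (e/3) HT) as [b [Amax Hcov]]. lra.
    destruct (fin_max (fun a k l => dW (f (psi k) (qgrid (Cantor.to_nat (a, b))))
                                       (f (psi l) (qgrid (Cantor.to_nat (a, b)))) <= e/3) Amax)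
      as [K HK].
    { intros a _. apply Hcg. lra. }
    exists K. intros k l Hk Hl t Ht. destruct (Hcov t Ht) as [a [Ha Hq]].
    set (q := qgrid (Cantor.to_nat (a, b))) in *.
    pose proof (HK a k l Ha Hk Hl) as A1.
    pose proof (metric_tri dW hW (f (psi k) t) (f (psi k) q) (f (psi l) t)) as A2.
    pose proof (metric_tri dW hW (f (psi k) q) (f (psi l) q) (f (psi l) t)) as A3.
    pose proof (Hlip (psi k) t q) as A4. pose proof (Hlip (psi l) q t) as A5.
    rewrite Rabs_minus_sym in A5. fold q in A1. lra. }
  assert (Hpt : forall t, exists y, Un_cv (fun k => dW (f (psi k) t) (iotaZ y)) 0).
  { intro t. destruct (app_point psi t Hpsi) as [C HC].
    apply (cauchy_conv W Z dW dZ iotaZ z0 hW hiso hZp _ C HC).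
    intros e He. destruct (Hunif (Rabs t + 1) e) as [K HK]. pose proof (Rabs_pos t); lra. lra.
    exists K. intros k l Hk Hl. apply HK; auto. lra. }
  destruct (choice_fun _ Hpt) as [gam Hgam].
  exists psi, gam. split; auto.
  intros T e HT He. destruct (Hunif T (e/2) HT) as [K HK]. lra.
  exists K. intros k Hk t Ht.
  destruct (Hgam t (e/2)) as [N HN]. lra.
  set (l := Nat.max K N). specialize (HN l ltac:(lia)). unfold R_dist in HN.
  rewrite Rminus_0_r in HN. pose proof (Rle_abs (dW (f (psi l) t) (iotaZ (gam t)))).
  pose proof (HK k l Hk ltac:(lia) t Ht).
  pose proof (metric_tri dW hW (f (psi k) t) (f (psi l) t) (iotaZ (gam t))). lra.
Qed.
End AA.


Lemma arc_lip {X} (d : X -> X -> R) (gamma : R -> X) l :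
  is_metric d -> arclength_param d gamma l ->
  forall a b, 0 <= a <= l -> 0 <= b <= l -> d (gamma a) (gamma b) <= Rabs (a - b).
Proof.
  intros hm [hl harc].
  assert (K : forall a b, 0 <= a -> a <= b -> b <= l -> d (gamma a) (gamma b) <= b - a).
  { intros a b Ha Hab Hb. destruct (harc a b Ha Hab Hb) as [Hub _].
    apply Hub. exists (fun i => match i with O => a | _ => b end), 1%nat. split.
    - split. reflexivity. split. reflexivity. intros i Hi. destruct i. lra. lia.
    - simpl. ring. }
  intros a b Ha Hb. destruct (Rle_dec a b).
  - rewrite Rabs_left1 by lra. specialize (K a b). lra.
  - rewrite Rabs_right by lra. rewrite (metric_sym d hm). specialize (K b a). lra.
Qed.

Lemma cp_lip {X} (d : X -> X -> R) g x : is_metric d -> CP_curve d g x ->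
  forall u v, d (g u) (g v) <= Rabs (u - v).
Proof.
  intros hm [gamma [l [t0 [harc [ht0 [hcp hg0]]]]]].
  set (c := fun t => Rmax 0 (Rmin l (t + t0))).
  assert (Hc : forall t, g t = gamma (c t) /\ 0 <= c t <= l).
  { intro t. destruct (hcp t) as [H1 [H2 H3]]. unfold c, Rmax, Rmin.
    destruct (Rle_dec t (- t0)).
    - rewrite H2 by lra. repeat destruct Rle_dec; try lra; split; try lra; f_equal; lra.
    - destruct (Rle_dec (l - t0) t).
      + rewrite H3 by lra. repeat destruct Rle_dec; try lra; split; try lra; f_equal; lra.
      + rewrite H1 by lra. repeat destruct Rle_dec; try lra; split; try lra; f_equal; lra. }
  intros u v. destruct (Hc u) as [Eu Hu]. destruct (Hc v) as [Ev Hv]. rewrite Eu, Ev.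
  eapply Rle_trans. apply (arc_lip d gamma l hm harc); auto.
  unfold c, Rmax, Rmin. destruct ht0.
  repeat destruct Rle_dec; unfold Rabs; repeat destruct Rcase_abs; lra.
Qed.


Theorem proposition4p2
  (X : Type) (d : X -> X -> R)
  (hmet : is_metric d) (hdoub : doubling d) (hprop : proper d)
  (eps : nat -> R) (heps_pos : forall k, 0 < eps k) (heps_lim : Un_cv eps 0)
  (A : X -> Prop)
  (hA : forall x, A x -> exists g : R -> X, CP_curve d g x /\ eps_good d eps g)
  (x0 : X) (hx0 : t_density_point d A x0)
  (r : nat -> R) (hr_pos : forall n, 0 < r n) (hr_lim : Un_cv r 0)
  (Z : Type) (dZ : Z -> Z -> R) (z0 : Z)
  (hZmet : is_metric dZ) (hZprop : proper dZ)
  (hconv : pGH_converges d x0 r dZ z0) :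
  exists (W : Type) (dW : W -> W -> R) (iota : nat -> X -> W) (iotaZ : Z -> W),
    pGH_realization d x0 r dZ z0 dW iota iotaZ /\
    forall z : Z,
      exists (gam : R -> Z) (s : R) (phi : nat -> nat) (ghat : nat -> R -> X),
        (forall u v, dZ (gam u) (gam v) = Rabs (u - v)) /\
        gam s = z /\
        (forall k, (phi k < phi (S k))%nat) /\
        (forall k, A (ghat k 0) /\ CP_curve d (ghat k) (ghat k 0) /\ eps_good d eps (ghat k)) /\
        (forall T e, 0 < T -> 0 < e -> exists K, forall k, (K <= k)%nat ->
           forall t, Rabs t <= T ->
             dW (iota (phi k) (ghat k (r (phi k) * t))) (iotaZ (gam t)) <= e).
Proof.
  destruct hconv as [W [dW [iota [iotaZ HR]]]].
  exists W, dW, iota, iotaZ. split; [exact HR|].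
  destruct HR as [hW [hio [hiso [hbase happ]]]].
  intro z. set (R0 := dZ z0 z).
  assert (HR0 : 0 <= R0) by apply (metric_pos dZ hZmet).
  destruct hx0 as [HAx0 Hdens].
  assert (Hgood : forall p : nat * nat, exists n, (snd p <= n)%nat /\
            exists a, A a /\ dW (iota n a) (iotaZ z) <= / (INR (fst p) + 1)).
  { intros [m L]. simpl. set (e := / (INR m + 1)).
    assert (He : 0 < e /\ e <= 1).
    { unfold e. pose proof (pos_INR m). split. apply Rinv_0_lt_compat; lra.
      rewrite <- Rinv_1. apply Rinv_le_contravar; lra. }
    destruct (happ (R0 + 1) (e/2)) as [N1 HN1]; try lra.
    destruct (hbase 1) as [N2 HN2]; try lra.
    set (eta := e / (2 * (R0 + 3))).
    assert (Heta : 0 < eta) by (unfold eta; apply Rdiv_lt_0_compat; lra).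
    destruct (Hdens 1 Rlt_0_1 eta Heta) as [delta [Hdelta Hd]].
    destruct (hr_lim (delta / (R0 + 3))) as [N3 HN3].
    { apply Rdiv_lt_0_compat; lra. }
    set (n := Nat.max L (Nat.max N1 (Nat.max N2 N3))).
    exists n. split. lia.
    destruct (proj2 (HN1 n ltac:(lia)) z) as [x Hx]. unfold R0; lra.
    specialize (HN2 n ltac:(lia)). specialize (HN3 n ltac:(lia)).
    unfold R_dist in HN2, HN3. rewrite Rminus_0_r in HN2, HN3.
    pose proof (hr_pos n) as Hrn.
    rewrite Rabs_right in HN3 by lra.
    rewrite Rabs_right in HN2 by (apply Rle_ge, metric_pos; auto).
    assert (Hxs : d x0 x / r n < R0 + 3).
    { rewrite <- hio.
      pose proof (metric_tri dW hW (iota n x0) (iotaZ z0) (iota n x)) as T1.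
      pose proof (metric_tri dW hW (iotaZ z0) (iotaZ z) (iota n x)) as T2.
      rewrite hiso in T2. rewrite (metric_sym dW hW (iotaZ z)) in T2. fold R0 in T2. lra. }
    set (rho := (R0 + 3) * r n).
    assert (Hrho : 0 < rho < delta).
    { unfold rho. split. apply Rmult_lt_0_compat; lra.
      apply Rmult_lt_compat_l with (r := R0 + 3) in HN3. 2: lra.
      replace ((R0 + 3) * (delta / (R0 + 3))) with delta in HN3 by (field; lra). lra. }
    assert (Hdx : d x0 x < rho).
    { unfold rho. replace (d x0 x) with ((d x0 x / r n) * r n) by (field; lra).
      apply Rmult_lt_compat_r; lra. }
    destruct (Hd rho (proj1 Hrho) (proj2 Hrho) x Hdx) as [b [Hb [_ Hxb]]].
    exists b. split; auto.
    pose proof (metric_tri dW hW (iota n b) (iota n x) (iotaZ z)) as T3.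
    rewrite hio in T3. rewrite (metric_sym d hmet b x) in T3.
    assert (d x b / r n <= e / 2).
    { replace (e/2) with ((eta * rho) / r n).
      apply Rmult_le_compat_r. left; apply Rinv_0_lt_compat; lra. exact Hxb.
      unfold eta, rho. field. split; lra. }
    fold e. lra. }
  destruct (choice_fun _ Hgood) as [Ch HCh].
  set (Nq := fix Nq (m : nat) : nat := match m with O => Ch (0, 0)%nat | S m' => Ch (S m', S (Nq m')) end).
  assert (HNq : sincr Nq).
  { intro m. change (Nq (S m)) with (Ch (S m, S (Nq m))). pose proof (proj1 (HCh (S m, S (Nq m)))).
    simpl in H. lia. }
  assert (Ha : forall m, exists a, A a /\ dW (iota (Nq m) a) (iotaZ z) <= / (INR m + 1)).
  { intro m. destruct m. exact (proj2 (HCh (0, 0)%nat)).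
    change (Nq (S m)) with (Ch (S m, S (Nq m))). exact (proj2 (HCh (S m, S (Nq m)))). }
  destruct (choice_fun _ Ha) as [aa Haa].
  assert (Hg : forall m, exists g, CP_curve d g (aa m) /\ eps_good d eps g).
  { intro m. apply hA. apply Haa. }
  destruct (choice_fun _ Hg) as [gg Hgg].
  assert (Hgg0 : forall m, gg m 0 = aa m).
  { intro m. destruct (Hgg m) as [[gamma [l [t0 [_ [_ [_ E]]]]]] _]. exact E. }
  set (f := fun m t => iota (Nq m) (gg m (r (Nq m) * t))).
  assert (Hlip : forall k u v, dW (f k u) (f k v) <= Rabs (u - v)).
  { intros k u v. unfold f. rewrite hio. pose proof (hr_pos (Nq k)) as Hr.
    pose proof (cp_lip d (gg k) (aa k) hmet (proj1 (Hgg k)) (r (Nq k) * u) (r (Nq k) * v)) as L.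
    replace (r (Nq k) * u - r (Nq k) * v) with (r (Nq k) * (u - v)) in L by ring.
    rewrite Rabs_mult, (Rabs_right (r (Nq k))) in L by lra.
    replace (Rabs (u - v)) with ((r (Nq k) * Rabs (u - v)) / r (Nq k)) by (field; lra).
    apply Rmult_le_compat_r. left; apply Rinv_0_lt_compat; lra. exact L. }
  assert (Hf0 : forall m, dW (f m 0) (iotaZ z) <= / (INR m + 1)).
  { intro m. unfold f. rewrite Rmult_0_r, Hgg0. apply Haa. }
  assert (Hf0' : forall m, dW (f m 0) (iotaZ z) <= 1).
  { intro m. eapply Rle_trans. apply Hf0. pose proof (pos_INR m).
    rewrite <- Rinv_1. apply Rinv_le_contravar; lra. }
  assert (Happ' : forall T, 0 < T -> exists C, forall e, 0 < e -> exists K, forall k, (K <= k)%nat ->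
     forall t, Rabs t <= T -> exists z', dZ z0 z' <= C /\ dW (f k t) (iotaZ z') <= e).
  { intros T HT. exists (R0 + T + 4). intros e He.
    destruct (happ (R0 + T + 2) (Rmin e 1)) as [N1 HN1]. lra.
    apply Rmin_glb_lt; lra.
    destruct (hbase 1) as [N2 HN2]; try lra.
    exists (Nat.max N1 N2). intros k Hk t Ht.
    assert (Hk' : (Nat.max N1 N2 <= Nq k)%nat) by (pose proof (sincr_ge _ HNq k); lia).
    specialize (HN2 (Nq k) ltac:(lia)). unfold R_dist in HN2. rewrite Rminus_0_r in HN2.
    rewrite Rabs_right in HN2 by (apply Rle_ge, metric_pos; auto).
    set (x := gg k (r (Nq k) * t)).
    assert (Hx : dW (iota (Nq k) x0) (iota (Nq k) x) <= R0 + T + 2).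
    { pose proof (metric_tri dW hW (iota (Nq k) x0) (iotaZ z0) (iota (Nq k) x)) as T1.
      pose proof (metric_tri dW hW (iotaZ z0) (iotaZ z) (iota (Nq k) x)) as T2.
      pose proof (metric_tri dW hW (iotaZ z) (f k 0) (iota (Nq k) x)) as T3.
      rewrite hiso in T2. fold R0 in T2.
      pose proof (Hlip k 0 t) as L. change (f k t) with (iota (Nq k) x) in L.
      rewrite Rminus_0_l, Rabs_Ropp in L.
      rewrite (metric_sym dW hW (iotaZ z) (f k 0)) in T3. pose proof (Hf0' k). lra. }
    rewrite hio in Hx.
    destruct (proj1 (HN1 (Nq k) ltac:(lia)) x Hx) as [z' Hz'].
    exists z'. split.
    - pose proof (metric_tri dW hW (iotaZ z0) (iota (Nq k) x0) (iotaZ z')) as T1.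
      pose proof (metric_tri dW hW (iota (Nq k) x0) (iota (Nq k) x) (iotaZ z')) as T2.
      rewrite hiso in T1. rewrite (metric_sym dW hW (iotaZ z0)) in T1. rewrite hio in T2.
      pose proof (Rmin_r e 1). lra.
    - unfold f. fold x. pose proof (Rmin_l e 1). lra. }
  destruct (AA W Z dW dZ iotaZ z0 hW hiso hZprop f Hlip Happ') as [psi [gam [Hpsi Hunif]]].
  assert (Hup : forall u v, dZ (gam u) (gam v) <= Rabs (u - v)).
  { intros u v. apply le_epsilon. intros e He.
    destruct (Hunif (Rabs u + Rabs v + 1) (e/2)) as [K HK].
    pose proof (Rabs_pos u); pose proof (Rabs_pos v); lra. lra.
    pose proof (HK K (le_n _) u ltac:(pose proof (Rabs_pos v); lra)) as A1.
    pose proof (HK K (le_n _) v ltac:(pose proof (Rabs_pos u); lra)) as A2.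
    pose proof (Hlip (psi K) u v) as A3.
    rewrite <- hiso.
    pose proof (metric_tri dW hW (iotaZ (gam u)) (f (psi K) u) (iotaZ (gam v))) as T1.
    pose proof (metric_tri dW hW (f (psi K) u) (f (psi K) v) (iotaZ (gam v))) as T2.
    rewrite (metric_sym dW hW (iotaZ (gam u)) (f (psi K) u)) in T1. lra. }
  assert (Hlow : forall t, 0 < t -> 2 * t <= dZ (gam t) (gam (- t))).
  { intros t Ht. apply le_epsilon. intros eta Heta.
    set (delta := eta / (4 * t)).
    assert (Hdl : 0 < delta) by (unfold delta; apply Rdiv_lt_0_compat; lra).
    destruct (heps_lim delta Hdl) as [K0 HK0].
    set (k0 := Nat.max K0 1).
    assert (Hk0 : 0 < INR k0) by (apply lt_0_INR; lia).
    destruct (hr_lim (/ (INR k0 * t))) as [N HN].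
    { apply Rinv_0_lt_compat. apply Rmult_lt_0_compat; lra. }
    destruct (Hunif t (eta/4) Ht) as [K HK]. lra.
    set (m := Nat.max K N).
    set (n := Nq (psi m)).
    assert (Hn : (N <= n)%nat).
    { unfold n. pose proof (sincr_ge _ HNq (psi m)). pose proof (sincr_ge _ Hpsi m). lia. }
    specialize (HN n Hn). unfold R_dist in HN. rewrite Rminus_0_r in HN.
    pose proof (hr_pos n) as Hrn. rewrite Rabs_right in HN by lra.
    set (h := r n * t).
    assert (Hh : 0 < h) by (unfold h; apply Rmult_lt_0_compat; lra).
    assert (Hh2 : h <= / INR k0).
    { unfold h. apply Rmult_lt_compat_r with (r := t) in HN; [|lra].
      replace (/ (INR k0 * t) * t) with (/ INR k0) in HN by (field; lra). lra. }
    destruct (Hgg (psi m)) as [_ Heg].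
    specialize (Heg k0 ltac:(lia) h). rewrite Rabs_right in Heg by lra.
    specialize (Heg Hh Hh2).
    specialize (HK0 k0 ltac:(lia)). unfold R_dist in HK0. rewrite Rminus_0_r in HK0.
    rewrite Rabs_right in HK0 by (apply Rle_ge; left; apply heps_pos).
    set (D := d (gg (psi m) h) (gg (psi m) (- h))) in *.
    assert (HD : D >= 2 * h * (1 - delta)).
    { set (q := D / (2 * h)) in *.
      replace D with (q * (2 * h)) by (unfold q; field; lra).
      assert (q >= 1 - delta) by (unfold Rabs in Heg; destruct Rcase_abs; lra).
      rewrite (Rmult_comm q). apply Rle_ge. apply Rmult_le_compat_l; lra. }
    assert (Hfw : dW (f (psi m) t) (f (psi m) (- t)) >= 2 * t - eta / 2).
    { unfold f. fold n. rewrite hio.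
      replace (r n * - t) with (- h) by (unfold h; ring). fold h. fold D.
      replace (2 * t - eta / 2) with ((2 * h * (1 - delta)) / r n).
      apply Rle_ge. apply Rmult_le_compat_r. left; apply Rinv_0_lt_compat; lra. lra.
      unfold h, delta. field. lra. }
    pose proof (HK m ltac:(lia) t ltac:(rewrite Rabs_right; lra)) as A1.
    pose proof (HK m ltac:(lia) (- t) ltac:(rewrite Rabs_Ropp, Rabs_right; lra)) as A2.
    pose proof (metric_tri dW hW (f (psi m) t) (iotaZ (gam t)) (f (psi m) (- t))) as T1.
    pose proof (metric_tri dW hW (iotaZ (gam t)) (iotaZ (gam (- t))) (f (psi m) (- t))) as T2.
    rewrite hiso in T2. rewrite (metric_sym dW hW (iotaZ (gam (- t)))) in T2. lra. }
  exists gam, 0, (fun k => Nq (psi k)), (fun k => gg (psi k)).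
  split; [|split; [|split; [|split]]].
  - intros u v.
    set (T := Rmax (Rabs u) (Rabs v)).
    assert (HuT : Rabs u <= T) by apply Rmax_l.
    assert (HvT : Rabs v <= T) by apply Rmax_r.
    assert (HT2 : 2 * T <= dZ (gam (- T)) (gam T)).
    { destruct (Rle_lt_or_eq_dec 0 T). pose proof (Rabs_pos u); lra.
      rewrite (metric_sym dZ hZmet). apply Hlow; auto.
      rewrite <- e. pose proof (metric_pos dZ hZmet (gam (-0)) (gam 0)). lra. }
    pose proof (metric_tri dZ hZmet (gam (- T)) (gam u) (gam T)) as T1.
    pose proof (metric_tri dZ hZmet (gam u) (gam v) (gam T)) as T2.
    pose proof (metric_tri dZ hZmet (gam (- T)) (gam v) (gam T)) as T3.
    pose proof (metric_tri dZ hZmet (gam v) (gam u) (gam T)) as T4.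
    rewrite (metric_sym dZ hZmet (gam v) (gam u)) in T4.
    pose proof (Hup (- T) u). pose proof (Hup (- T) v).
    pose proof (Hup v T). pose proof (Hup u T). pose proof (Hup u v).
    revert HuT HvT H H0 H1 H2 H3. unfold Rabs. repeat destruct Rcase_abs; intros; lra.
  - apply (proj1 (proj1 (proj2 hZmet) (gam 0) z)).
    apply Rle_antisym; [| apply (metric_pos dZ hZmet)].
    apply le_epsilon. intros e He.
    destruct (Hunif 1 (e/2)) as [K HK]; try lra.
    destruct (inv_small (e/2)) as [N HN]. lra.
    set (k := Nat.max K N).
    pose proof (HK k ltac:(lia) 0 ltac:(rewrite Rabs_R0; lra)) as A1.
    assert (Hk : (N <= psi k)%nat) by (pose proof (sincr_ge _ Hpsi k); lia).
    pose proof (HN _ Hk) as A2. pose proof (Hf0 (psi k)) as A3.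
    rewrite <- hiso.
    pose proof (metric_tri dW hW (iotaZ (gam 0)) (f (psi k) 0) (iotaZ z)) as T1.
    rewrite (metric_sym dW hW (iotaZ (gam 0)) (f (psi k) 0)) in T1. lra.
  - intro k. apply (sincr_comp Nq psi HNq Hpsi).
  - intro k. rewrite Hgg0. split. apply Haa. apply Hgg.
  - exact Hunif.
Qed.
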